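(* Let $\Sigma=\{x_1,\dots,x_d\}$ be a finite alphabet, $\mathbf w$ a right-infinite word over $\Sigma$, and $A_{\mathbf w}$ its factor algebra over $\mathbb Q$. Let $x=x_1+\cdots+x_d\in A_{\mathbf w}$, let $n\ge 1$, and let $V_n$ be the $\mathbb Q$-span of the factors of $\mathbf w$ of length $n$. Define the linear map $\Phi_n:V_n\to A_{\mathbf w}$ by $\Phi_n(u)=ux-xu$. Then the kernel of $\Phi_n$ is one-dimensional, spanned by $x^n=\sum_{u\in\mathrm{Fac}(\mathbf w),\,|u|=n}u$. Consequently, if $W_{n+1}$ denotes the $\mathbb Q$-span of all $ab-ba$ with $a,b\in\mathrm{Fac}(\mathbf w)$, $|a|+|b|=n+1$, then $\dim W_{n+1}\ge \dim V_n-1$.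
   Context: $\mathrm{Fac}(\mathbf w)$ is the set of finite factors (contiguous blocks, including the empty word) of $\mathbf w$. The factor algebra $A_{\mathbf w}$ over $\mathbb Q$ is the $\mathbb Q$-vector space with basis $\mathrm{Fac}(\mathbf w)$, with multiplication defined on basis elements by $u\cdot v=uv$ (concatenation) if $uv\in\mathrm{Fac}(\mathbf w)$ and $u\cdot v=0$ otherwise, extended bilinearly. In this algebra $x^n$ equals the sum of all factors of $\mathbf w$ of length $n$. *)

(* Defs.v *)
(* The factor algebra A_w over Q is modelled by functions
   seq Sigma -> rat (coefficient of each word); genuine elements of A_w are the
   finitely supported ones supported on Fac(w). *)
From mathcomp Require Import all_boot all_algebra.
From Stdlib Require Import ClassicalEpsilon.
Set Implicit Arguments. Unset Strict Implicit. Unset Printing Implicit Defensive.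
Import GRing.Theory.
Local Open Scope ring_scope.

Section FactorAlgebra.
Variables (Sigma : finType) (w : nat -> Sigma).

Definition factor (s : seq Sigma) : Prop :=
  exists i : nat, s = [seq w (i + k)%N | k <- iota 0 (size s)].

Definition alg := seq Sigma -> rat.

Definition bas (u : seq Sigma) : alg := fun s =>
  if excluded_middle_informative (factor u) then (if s == u then 1 else 0) else 0.

(* bilinear extension of u.v = uv if uv in Fac(w), 0 otherwise *)
Definition amul (f g : alg) : alg := fun s =>
  if excluded_middle_informative (factor s)
  then \sum_(i < (size s).+1) f (take i s) * g (drop i s) else 0.

Definition aone : alg := bas [::].

Definition apow (f : alg) (k : nat) : alg := iter k (amul f) aone.

Definition xsum : alg := fun s => \sum_(a : Sigma) bas [:: a] s.

Definition facsum (n : nat) : alg := fun s =>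
  if excluded_middle_informative (factor s /\ size s = n) then 1 else 0.

Definition inV (n : nat) (f : alg) : Prop :=
  forall s, f s != 0 -> factor s /\ size s = n.

Definition Phi (u : alg) : alg := fun s => amul u xsum s - amul xsum u s.

Definition inW (m : nat) (f : alg) : Prop :=
  exists ps : seq (rat * seq Sigma * seq Sigma),
    (forall t, t \in ps -> [/\ factor t.1.2, factor t.2 & size t.1.2 + size t.2 = m]%N) /\
    forall s, f s = \sum_(t <- ps)
        t.1.1 * (amul (bas t.1.2) (bas t.2) s - amul (bas t.2) (bas t.1.2) s).

End FactorAlgebra.

(* Main.v *)
Require Import Defs.
From mathcomp Require Import all_boot all_algebra.
From Stdlib Require Import ClassicalEpsilon FunctionalExtensionality.
Import GRing.Theory.
Local Open Scope ring_scope.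
Set Implicit Arguments.

Notation EMI := excluded_middle_informative.
Ltac cE := match goal with |- context[excluded_middle_informative ?P] => let H := fresh in destruct (excluded_middle_informative P) as [H|H]; move: H end.

Lemma factorP (Sigma : finType) (w : nat -> Sigma) s :
  factor w s <-> exists i, forall k, (k < size s)%N -> nth (w 0%N) s k = w (i + k)%N.
Proof.
split.
- case=> i Hs; exists i => k Hk; rewrite Hs (nth_map 0%N); last by rewrite size_iota.
  by rewrite nth_iota.
- case=> i H; exists i; apply: (@eq_from_nth _ (w 0%N)); first by rewrite size_map size_iota.
  move=> k Hk; rewrite H // (nth_map 0%N); last by rewrite size_iota.
  by rewrite nth_iota.
Qed.

Lemma factor_take (Sigma : finType) (w : nat -> Sigma) s j :
  factor w s -> factor w (take j s).
Proof.
move/factorP=> [i H]; apply/factorP; exists i => k Hk.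
rewrite nth_take; last by move: Hk; rewrite size_take; case: ifP => // /negbT; rewrite -leqNgt => Hsj Hk; exact: leq_trans Hk Hsj.
apply: H; move: Hk; rewrite size_take; case: ifP => // Hj Hk; exact: ltn_trans Hk Hj.
Qed.

Lemma factor_drop (Sigma : finType) (w : nat -> Sigma) s j :
  factor w s -> factor w (drop j s).
Proof.
move/factorP=> [i H]; apply/factorP; exists (i + j)%N => k Hk.
rewrite nth_drop H; first by rewrite addnA.
by move: Hk; rewrite size_drop ltn_subRL addnC.
Qed.

Lemma factor_W (Sigma : finType) (w : nat -> Sigma) i m :
  factor w [seq w (i + k)%N | k <- iota 0 m].
Proof. by exists i; rewrite size_map size_iota. Qed.

Lemma xsumE (Sigma : finType) (w : nat -> Sigma) s : xsum w s = facsum w 1 s.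
Proof.
rewrite /xsum /facsum.
case: s => [|b [|c s]].
- rewrite big1; first by cE => // -[].
  by move=> a _; rewrite /bas; cE.
- rewrite (bigD1 b) //= big1 ?addr0.
    rewrite /bas eqxx; cE => H; cE => //.
      by move=> H'; case: H'.
    by case.
  move=> a Hab; rewrite /bas; cE => // Ha.
  by rewrite eqseq_cons eq_sym (negbTE Hab).
- rewrite big1; first by cE => // -[].
  by move=> a _; rewrite /bas; cE => // Ha; rewrite eqseq_cons /= andbF.
Qed.

Lemma amul_graded (Sigma : finType) (w : nat -> Sigma) (f g : alg Sigma) p q s :
  (forall t, f t != 0 -> size t = p) -> (forall t, g t != 0 -> size t = q) ->
  amul w f g s = if EMI (factor w s /\ size s = (p + q)%N)
                 then f (take p s) * g (drop p s) else 0.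
Proof.
move=> Hf Hg; rewrite /amul.
have key : forall i : 'I_(size s).+1, f (take i s) * g (drop i s) != 0 ->
    i = p :> nat /\ size s = (p + q)%N.
  move=> i; case: (f (take i s) =P 0) => [->|/eqP Hf0]; first by rewrite mul0r eqxx.
  case: (g (drop i s) =P 0) => [->|/eqP Hg0]; first by rewrite mulr0 eqxx.
  move=> _; have Hi : (i <= size s)%N by rewrite -ltnS.
  have Ei := Hf _ Hf0; rewrite size_takel // in Ei.
  have Eq := Hg _ Hg0; rewrite size_drop in Eq.
  split=> //; rewrite -Ei -Eq subnKC //.
cE => Fs; cE => [[Fs2 Hs]|Hn] /=.
- have Hp : (p < (size s).+1)%N by rewrite Hs ltnS leq_addr.
  rewrite (bigD1 (Ordinal Hp)) //= big1 ?addr0 // => i Hi.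
  apply/eqP; move: Hi; apply: contraNT => /key [Hip _]; apply/eqP; exact: val_inj.
- apply: big1 => i _; apply/eqP; case: (f (take i s) * g (drop i s) =P 0) => // /eqP /key [_ Hs]; by case: Hn.
- by case: Fs.
- by [].
Qed.

Lemma facsum_supp (Sigma : finType) (w : nat -> Sigma) m t :
  facsum w m t != 0 -> size t = m.
Proof. rewrite /facsum; cE => [[F S]|H] /=; [by [] | by move/eqP].
Qed.

Lemma facsum1 (Sigma : finType) (w : nat -> Sigma) m t :
  factor w t -> size t = m -> facsum w m t = 1.
Proof. move=> F S; rewrite /facsum; cE => // H; by case: H. Qed.

Lemma facsum0 (Sigma : finType) (w : nat -> Sigma) m t :
  ~ (factor w t /\ size t = m) -> facsum w m t = 0.
Proof. move=> H; rewrite /facsum; cE => // H'; by case: H. Qed.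

Lemma Phi_V (Sigma : finType) (w : nat -> Sigma) n (u : alg Sigma) :
  inV w n u -> forall s, Phi w u s =
    if EMI (factor w s /\ size s = n.+1) then u (take n s) - u (drop 1 s) else 0.
Proof.
move=> Hu s; rewrite /Phi (@amul_graded _ _ _ _ n 1%N); first last.
- by move=> t; rewrite xsumE => /facsum_supp.
- by move=> t /Hu [].
rewrite (@amul_graded _ _ _ _ 1%N n); first last.
- by move=> t /Hu [].
- by move=> t; rewrite xsumE => /facsum_supp.
rewrite addn1 add1n; cE => [[Fs Hs]|Hn] /=; last by rewrite subrr.
rewrite !xsumE !facsum1 ?mulr1 ?mul1r //.
- exact: factor_take.
- by rewrite size_takel // Hs.
- exact: factor_drop.
- by rewrite size_drop Hs subSnn.
Qed.

Lemma apowE (Sigma : finType) (w : nat -> Sigma) k : apow w (xsum w) k = facsum w k.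
Proof.
elim: k => [|k IH].
- apply: functional_extensionality => s; rewrite /apow /= /aone /bas /facsum.
  cE => [F0|]; last by case; exists 0%N.
  cE => [[Fs Hs]|Hn] /=; first by move/size0nil: Hs => ->; rewrite eqxx.
  case: eqP => // E; case: Hn; by rewrite E.
- apply: functional_extensionality => s.
  rewrite /apow iterS -/(apow w (xsum w) k) IH.
  rewrite (@amul_graded _ _ _ _ 1%N k); first last.
  + by move=> t /facsum_supp.
  + by move=> t; rewrite xsumE => /facsum_supp.
  cE => [[Fs Hs]|Hn] /=.
  + rewrite xsumE !facsum1 ?mulr1 //.
    * exact: factor_drop.
    * by rewrite size_drop Hs add1n subSS subn0.
    * exact: factor_take.
    * by rewrite size_takel // Hs.
  + rewrite facsum0 // => -[F S]; apply: Hn; by rewrite add1n.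
Qed.

Definition Wd (Sigma : finType) (w : nat -> Sigma) i m := [seq w (i + k)%N | k <- iota 0 m].
Arguments Wd {Sigma}.

Lemma kernel_fwd (Sigma : finType) (w : nat -> Sigma) n (u : alg Sigma) :
  inV w n u -> (forall s, Phi w u s = 0) ->
  exists c : rat, forall s, u s = c * facsum w n s.
Proof.
move=> Hu Hp.
have step : forall i, u (Wd w i n) = u (Wd w i.+1 n).
  move=> i; have := Hp (Wd w i n.+1); rewrite (Phi_V Hu).
  cE => [HH|H] /=; last first.
    by case: H; split; [exact: factor_W | rewrite size_map size_iota].
  move/eqP; rewrite subr_eq0 => /eqP.
  rewrite /Wd -map_take -map_drop take_iota drop_iota (minn_idPl (leqnSn n)).
  rewrite subn0 => ->; congr (u _).
  rewrite (iotaDl 1 0) -map_comp; apply: eq_map => k /=.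
  by rewrite addnA addn1.
have all0 : forall i, u (Wd w i n) = u (Wd w 0 n).
  elim=> [//|i IH]; by rewrite -step.
exists (u (Wd w 0 n)) => s.
case: (EMI (factor w s /\ size s = n)) => [[[i Es] Hs]|H].
- have Fs : factor w s by exists i.
  rewrite facsum1 // mulr1 -(all0 i) /Wd {1}Es Hs //.
- rewrite facsum0 // mulr0; apply/eqP; case: (u s =P 0) => // /eqP /Hu; by [].
Qed.

Lemma amul_suml (Sigma : finType) (w : nat -> Sigma) (I : Type) (r : seq I)
  (c : I -> rat) (f : I -> alg Sigma) (g : alg Sigma) s :
  amul w (fun t => \sum_(j <- r) c j * f j t) g s = \sum_(j <- r) c j * amul w (f j) g s.
Proof.
rewrite /amul; cE => Fs /=; last by rewrite big1 // => j _; rewrite mulr0.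
under eq_bigr do rewrite mulr_suml.
rewrite exchange_big /=; apply: eq_bigr => j _; rewrite mulr_sumr.
by apply: eq_bigr => i _; rewrite mulrA.
Qed.

Lemma amul_sumr (Sigma : finType) (w : nat -> Sigma) (I : Type) (r : seq I)
  (c : I -> rat) (f : alg Sigma) (g : I -> alg Sigma) s :
  amul w f (fun t => \sum_(j <- r) c j * g j t) s = \sum_(j <- r) c j * amul w f (g j) s.
Proof.
rewrite /amul; cE => Fs /=; last by rewrite big1 // => j _; rewrite mulr0.
under eq_bigr do rewrite mulr_sumr.
rewrite exchange_big /=; apply: eq_bigr => j _; rewrite mulr_sumr.
by apply: eq_bigr => i _; rewrite mulrCA.
Qed.

Lemma xsum_eq (Sigma : finType) (w : nat -> Sigma) :
  xsum w = (fun t => \sum_(a <- index_enum Sigma) 1 * bas w [:: a] t).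
Proof. apply: functional_extensionality => t; rewrite /xsum; apply: eq_bigr => a _; by rewrite mul1r. Qed.

Lemma amul0l (Sigma : finType) (w : nat -> Sigma) (f g : alg Sigma) s :
  (forall t, f t = 0) -> amul w f g s = 0.
Proof. move=> H; rewrite /amul; cE => // Hs; apply: big1 => i _; by rewrite H mul0r. Qed.

Lemma amul0r (Sigma : finType) (w : nat -> Sigma) (f g : alg Sigma) s :
  (forall t, g t = 0) -> amul w f g s = 0.
Proof. move=> H; rewrite /amul; cE => // Hs; apply: big1 => i _; by rewrite H mulr0. Qed.

Lemma bas_nf (Sigma : finType) (w : nat -> Sigma) v t : ~ factor w v -> bas w v t = 0.
Proof. by move=> H; rewrite /bas; cE. Qed.

Lemma basE (Sigma : finType) (w : nat -> Sigma) v t : factor w v -> bas w v t = if t == v then 1 else 0.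
Proof. by move=> H; rewrite /bas; cE. Qed.

Lemma Phi_bas (Sigma : finType) (w : nat -> Sigma) u s :
  Phi w (bas w u) s = \sum_(a <- index_enum Sigma)
     (amul w (bas w u) (bas w [:: a]) s - amul w (bas w [:: a]) (bas w u) s).
Proof.
rewrite /Phi xsum_eq amul_sumr amul_suml -sumrB; apply: eq_bigr => a _; by rewrite !mul1r.
Qed.

Lemma inW_Phi (Sigma : finType) (w : nat -> Sigma) n u :
  factor w u -> size u = n -> inW w n.+1 (Phi w (bas w u)).
Proof.
move=> Fu Su.
pose P := fun a : Sigma => if EMI (factor w [:: a]) then true else false.
exists [seq (1%R, u, [:: a]) | a <- index_enum Sigma & P a]; split.
- move=> t /mapP [a]; rewrite mem_filter => /andP [Pa _] -> /=.
  split=> //; last by rewrite Su addn1.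
  by move: Pa; rewrite /P; cE.
- move=> s; rewrite Phi_bas big_map big_filter [RHS]big_mkcond /=.
  apply: eq_bigr => a _; rewrite /P; cE => H /=; first by rewrite mul1r.
  rewrite amul0r; last by move=> t; rewrite bas_nf.
  by rewrite amul0l ?subrr // => t; rewrite bas_nf.
Qed.

Lemma Phi_lin (Sigma : finType) (w : nat -> Sigma) (I : Type) (r : seq I)
  (c : I -> rat) (f : I -> alg Sigma) s :
  Phi w (fun t => \sum_(j <- r) c j * f j t) s = \sum_(j <- r) c j * Phi w (f j) s.
Proof.
rewrite /Phi amul_suml xsum_eq amul_sumr.
under [in RHS]eq_bigr do rewrite mulrBr.
rewrite sumrB; congr (_ - _); apply: eq_bigr => j _; by rewrite amul_sumr.
Qed.

Theorem mainTheorem7 (Sigma : finType) (w : nat -> Sigma) (n : nat) :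
  (1 <= n)%N ->
  (* x^n (power in A_w) is the sum of the factors of length n, and is nonzero *)
  (forall s, apow w (xsum w) n s = facsum w n s) /\
  (exists s, facsum w n s != 0) /\
  (* ker Phi_n = span (x^n) *)
  (forall u : alg Sigma, inV w n u ->
     ((forall s, Phi w u s = 0) <-> exists c : rat, forall s, u s = c * facsum w n s)) /\
  (* dim W_(n+1) >= dim V_n - 1, where dim V_n = number of factors of length n *)
  (forall L : seq (seq Sigma), uniq L ->
     (forall s, s \in L <-> factor w s /\ size s = n) ->
     exists F : 'I_(size L).-1 -> alg Sigma,
       (forall j, inW w n.+1 (F j)) /\
       (forall c : 'I_(size L).-1 -> rat,
          (forall s, \sum_j c j * F j s = 0) -> forall j, c j = 0)).
Proof.
move=> Hn; split; first by move=> s; rewrite apowE.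
split.
  exists (Wd w 0 n); rewrite facsum1 ?oner_eq0 //; first exact: factor_W.
  by rewrite size_map size_iota.
split.
  move=> u Hu; split; first exact: kernel_fwd.
  case=> c Hc s; rewrite (Phi_V Hu); cE => [[Fs Hs]|H] /=; last done.
  rewrite !Hc !facsum1 ?subrr //.
  - exact: factor_drop Fs.
  - by rewrite size_drop Hs subSS subn0.
  - exact: factor_take Fs.
  - by rewrite size_takel // Hs.

move=> L UL HL.
have Lj : forall k : 'I_(size L).-1, (k < size L)%N.
  move=> k; exact: leq_trans (ltn_ord k) (leq_pred _).
have FL : forall k, (k < size L)%N -> factor w (nth [::] L k).
  by move=> k Hk; have /HL [] := mem_nth [::] Hk.
exists (fun j : 'I_(size L).-1 => Phi w (bas w (nth [::] L j))); split.
  move=> j; have /HL [F S] := mem_nth [::] (Lj j).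
  exact: inW_Phi F S.
move=> c Hc j.
have Hm : ((size L).-1 < size L)%N.
  by rewrite ltn_predL (leq_ltn_trans (leq0n j) (Lj j)).
pose v := fun t => \sum_(k : 'I_(size L).-1) c k * bas w (nth [::] L k) t.
have Hv : inV w n v.
  move=> t Ht.
  case: (pickP (fun k : 'I_(size L).-1 => bas w (nth [::] L k) t != 0)) => [k Hk|H0].
  - move: Hk; rewrite basE; last exact: FL.
    case: (t =P nth [::] L k) => [-> _|]; [apply/HL; exact: mem_nth | by rewrite eqxx].
  - exfalso; move: Ht; rewrite /v big1 ?eqxx // => k _.
    by have := H0 k; move/negbFE/eqP => ->; rewrite mulr0.
have HPv : forall s, Phi w v s = 0.
  move=> s; rewrite /v Phi_lin; exact: Hc.
have [c0 Hc0] := kernel_fwd Hv HPv.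
have vlast : v (nth [::] L (size L).-1) = 0.
  rewrite /v big1 // => k _; rewrite basE; last exact: FL.
  rewrite nth_uniq //.
  by rewrite (gtn_eqF (ltn_ord k)) mulr0.
have c00 : c0 = 0.
  have := Hc0 (nth [::] L (size L).-1); rewrite vlast facsum1 ?mulr1 //.
  all: try by have /HL [] := mem_nth [::] Hm.
have vj : v (nth [::] L j) = c j.
  rewrite /v (bigD1 j) //= big1 ?addr0; first by rewrite basE ?eqxx ?mulr1 //; exact: FL.
  move=> k Hk; rewrite basE; last exact: FL.
  rewrite nth_uniq //.
  by rewrite val_eqE eq_sym (negbTE Hk) mulr0.
by rewrite -vj Hc0 c00 mul0r.
Qed.
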